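(* Let $g\ge1$ and let $Q$ be the $g\times g$ matrix with $Q_{ii}=2$, $Q_{ij}=1$ ($i\neq j$). For two vertices $\mathbf a,\mathbf a'$ of the Voronoi polytope $V_Q$, we have $\mathbf a\sim\mathbf a'$ if and only if there exists $k\in\{1,\dots,g\}$ with $\mathbf a,\mathbf a'\in[\mathbf k]$.
   Context: $V_Q=\{\mathbf a\in\mathbb R^g:\ \mathbf a^TQ\mathbf a\le(\mathbf a-\mathbf c)^TQ(\mathbf a-\mathbf c)\ \forall\mathbf c\in\mathbb Z^g\}$ (Voronoi polytope of the genus-$g$ banana graph). For a vertex $\mathbf a$, $\mathcal D_{\mathbf a,Q}=\{\mathbf c\in\mathbb Z^g:\ \mathbf a^TQ\mathbf a=(\mathbf a-\mathbf c)^TQ(\mathbf a-\mathbf c)\}$. Vertices satisfy $\mathbf a\sim\mathbf a'$ iff $\mathbf a'=\mathbf a-\mathbf c_0$ for some $\mathbf c_0\in\mathcal D_{\mathbf a,Q}$. For $k=1,\dots,g$, $[\mathbf k]$ is the set of vectors in $\mathbb R^g$ with all entries in $\{-\tfrac{k}{g+1},\tfrac{g+1-k}{g+1}\}$ and with either $k$ or $k-1$ entries equal to $\tfrac{g+1-k}{g+1}$; the vertex set of $V_Q$ is $\bigcup_{k=1}^g[\mathbf k]$. *)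

(* Defs.v *)
From HB Require Import structures.
From mathcomp Require Import all_boot all_order all_algebra.
From mathcomp Require Import reals.
Set Implicit Arguments. Unset Strict Implicit. Unset Printing Implicit Defensive.
Import Order.TTheory GRing.Theory Num.Theory.
Local Open Scope ring_scope.

Section Banana.
Variable R : realType.

Definition Qbanana (g : nat) : 'M[R]_g :=
  \matrix_(i, j) (if i == j then 2 else 1).

Definition qform (g : nat) (Q : 'M[R]_g) (x : 'cV[R]_g) : R :=
  (x^T *m Q *m x) 0 0.

Definition intvec (g : nat) (c : 'cV[int]_g) : 'cV[R]_g :=
  map_mx (fun z : int => z%:~R) c.

Definition voronoi (g : nat) (Q : 'M[R]_g) (a : 'cV[R]_g) : Prop :=
  forall c : 'cV[int]_g, qform Q a <= qform Q (a - intvec c).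

Definition is_vertex (g : nat) (Q : 'M[R]_g) (a : 'cV[R]_g) : Prop :=
  voronoi Q a /\
  forall (x y : 'cV[R]_g) (t : R), voronoi Q x -> voronoi Q y ->
    0 < t < 1 -> a = t *: x + (1 - t) *: y -> x = y.

Definition in_D (g : nat) (Q : 'M[R]_g) (a : 'cV[R]_g) (c : 'cV[int]_g) : Prop :=
  qform Q a = qform Q (a - intvec c).

Definition vsim (g : nat) (Q : 'M[R]_g) (a a' : 'cV[R]_g) : Prop :=
  exists c0 : 'cV[int]_g, in_D Q a c0 /\ a' = a - intvec c0.

Definition bracket (g k : nat) (a : 'cV[R]_g) : Prop :=
  let hi : R := ((g + 1)%:R - k%:R) / (g + 1)%:R in
  let lo : R := - (k%:R / (g + 1)%:R) in
  (forall i : 'I_g, a i 0 = lo \/ a i 0 = hi) /\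
  (#|[set i : 'I_g | a i 0 == hi]| = k \/ #|[set i : 'I_g | a i 0 == hi]| = k.-1).

End Banana.

(* Main.v *)
Require Import Defs.
From HB Require Import structures.
From mathcomp Require Import all_boot all_order all_algebra.
From mathcomp Require Import reals.
From mathcomp Require Import ring lra zify.
Set Implicit Arguments. Unset Strict Implicit. Unset Printing Implicit Defensive.
Import Order.TTheory GRing.Theory Num.Theory.
Local Open Scope ring_scope.
Section Y.
Variable R : realType.

Definition Pn n (y : 'I_n -> R) := \sum_k y k = 0 /\ forall i j, y i - y j <= 1.
Definition extr n (y : 'I_n -> R) := forall (u v : 'I_n -> R) (t : R),
  Pn u -> Pn v -> 0 < t < 1 -> (forall k, y k = t * u k + (1 - t) * v k) ->
  forall k, u k = v k.

Lemma small_pos n (f : 'I_n -> R) : (forall j, 0 < f j) ->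
  exists2 d, 0 < d & forall j, d <= f j.
Proof.
move=> fp; set s := 1 + \sum_j (f j)^-1.
have s0 : 0 < s.
  rewrite /s ltr_pwDl // sumr_ge0 // => j _; rewrite invr_ge0 ltW //.
exists s^-1; first by rewrite invr_gt0.
move=> j; rewrite -[f j]invrK lef_pV2 ?posrE ?invr_gt0 //.
rewrite /s (bigD1 j) //= addrCA ler_wpDr //.
rewrite addr_ge0 // sumr_ge0 // => k _; rewrite invr_ge0 ltW //.
Qed.

Lemma key n (y : 'I_n -> R) : (1 < n)%N -> Pn y -> extr y ->
  forall i, exists j, y i - y j = 1 \/ y j - y i = 1.
Proof.
move=> hn [s0 hy] ex i.
case: (boolP [exists j, (y i - y j == 1) || (y j - y i == 1)]).
  by move=> /existsP [j /orP [/eqP h|/eqP h]]; exists j; [left|right].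
rewrite negb_exists => /forallP H0.
have H : forall j, ~ (y i - y j = 1 \/ y j - y i = 1).
  by move=> j [h|h]; move: (H0 j); rewrite h eqxx ?orbT.
have fp : forall j, 0 < 1 - `|y i - y j|.
  move=> j; rewrite subr_gt0; have := H j.
  have := hy i j; have := hy j i.
  case: (lerP 0 (y i - y j)) => h.
    rewrite ger0_norm // => h1 h2 h3; rewrite lt_neqAle h2 andbT.
    by apply/negP => /eqP e; apply: h3; left.
  rewrite ltr0_norm // => h1 h2 h3; rewrite lt_neqAle.
  have -> : - (y i - y j) = y j - y i by ring.
  rewrite h1 andbT; apply/negP => /eqP e; apply: h3; right; exact: e.
have [d d0 dle] := small_pos fp.
have n0 : 0 < n%:R :> R by rewrite ltr0n; apply: ltn_trans hn.
set u := fun k => y k + (if k == i then d else 0) - d / n%:R.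
set v := fun k => y k - (if k == i then d else 0) + d / n%:R.
have sumd : \sum_(k < n) (if k == i then d else 0) = d.
  rewrite (bigD1 i) //= eqxx big1 ?addr0 // => k /negbTE ->; done.
have sumc : \sum_(k < n) (d / n%:R) = d.
  rewrite sumr_const card_ord -mulr_natr; field.
  by rewrite gt_eqF.
have nrm : forall j, y i - y j <= `|y i - y j| /\ y j - y i <= `|y i - y j|.
  move=> j; split; first exact: ler_norm.
  rewrite -normrN; have -> : - (y i - y j) = y j - y i by ring.
  exact: ler_norm.
have Pu : Pn u.
  split.
    rewrite /u big_split /= big_split /= sumrN s0 sumd sumc; ring.
  move=> a b; rewrite /u.
  case: (eqVneq a i) => [->|ha]; case: (eqVneq b i) => [->|hb].
  - have := hy i i; lra.
  - have := dle b; have := nrm b; have := hy i b; lra.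
  - have := hy a i; lra.
  - have := hy a b; lra.
have Pv : Pn v.
  split.
    rewrite /v big_split /= big_split /= sumrN s0 sumd sumc; ring.
  move=> a b; rewrite /v.
  case: (eqVneq a i) => [->|ha]; case: (eqVneq b i) => [->|hb].
  - have := hy i i; lra.
  - have := hy i b; lra.
  - have := dle a; have := nrm a; have := hy a i; lra.
  - have := hy a b; lra.
have t0 : 0 < (1/2 : R) < 1 by apply/andP; split; lra.
have := ex u v (1/2) Pu Pv t0 => /(_ _ i).
have e : forall k, y k = 1/2 * u k + (1 - 1/2) * v k.
  move=> k; rewrite /u /v /=; field; by rewrite gt_eqF.
move/(_ e); rewrite /u /v /= eqxx.
have : d / n%:R < d.
  rewrite ltr_pdivrMr // ltr_pMr // ltr1n //.
lra.
Qed.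

Lemma classify n (y : 'I_n -> R) (i0 : 'I_n) : (1 < n)%N -> Pn y -> extr y ->
  exists m, [/\ forall k, y k = m \/ y k = m - 1, exists p, y p = m & exists q, y q = m - 1].
Proof.
move=> hn hP ex; have K := key hn hP ex; case: hP => _ hy.
have [p [q pq]] : exists p q, y p - y q = 1.
  have [j [h|h]] := K i0; [exists i0, j | exists j, i0]; exact h.
exists (y p); split; [|by exists p| by exists q; lra].
move=> k; have [l [h|h]] := K k.
  left; have := hy k q; have := hy p l; lra.
right; have := hy k q; have := hy p k; have := hy l q; lra.
Qed.



Lemma sum_if m (j : 'I_m) (F : 'I_m -> R) :
  \sum_(i < m) (if i == j then F i else 0) = F j.
Proof. by rewrite (bigD1 j) //= eqxx big1 ?addr0 // => k /negbTE ->. Qed.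

Lemma term_ge0 (w : R) (z : int) : -(1/2) <= w <= 1/2 ->
  0 <= (z%:~R)^+2 - 2 * w * z%:~R.
Proof.
move=> /andP [w1 w2].
have : (1 <= z)%R \/ z = 0 \/ (1 <= - z)%R by lia.
case=> [h|[->|h]].
- have : (1 : R) <= z%:~R by rewrite ler1z.
  move=> h'; nra.
- rewrite expr2 !mul0r mulr0; lra.
- have : (1 : R) <= (- z)%:~R by rewrite ler1z.
  rewrite intrN => h'; nra.
Qed.

Lemma vorY n (y : 'I_n -> R) : \sum_k y k = 0 ->
  (forall z : 'I_n -> int, \sum_k z k = 0 ->
     \sum_k (y k)^+2 <= \sum_k (y k - (z k)%:~R)^+2) <->
  (forall i j, y i - y j <= 1).
Proof.
move=> s0; split.
  move=> H i j; case: (eqVneq i j) => [->|ij]; first by rewrite subrr ler01.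
  have ji : j != i by rewrite eq_sym.
  pose z k : int := if k == i then 1 else if k == j then -1 else 0.
  have zs : \sum_k z k = 0.
    rewrite (bigD1 i) //= (bigD1 j) 1?eq_sym //= /z eqxx (negbTE ji) eqxx.
    rewrite big1 ?addr0 // => k /andP [/negbTE -> /negbTE ->] //.
  have := H z zs.
  have -> : \sum_k (y k - (z k)%:~R) ^+ 2 =
     \sum_k (y k)^+2 + \sum_k ((z k)%:~R ^+2 - 2 * y k * (z k)%:~R).
    rewrite -big_split /=; apply: eq_bigr => k _; ring.
  rewrite lerDl (bigD1 i) //= (bigD1 j) 1?eq_sym //= /z eqxx (negbTE ji) eqxx.
  rewrite big1 ?addr0; last first.
    by move=> k /andP [/negbTE -> /negbTE ->]; rewrite expr2 !mulr0 subrr.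
  rewrite intrN; lra.
move=> H z zs.
case: n y z s0 H zs => [|n] y z s0 H zs.
  by rewrite !big_ord0.
case: (@arg_maxP _ R _ ord0 predT y) => //= p _ hp.
set t := y p - 1/2.
have -> : \sum_k (y k - (z k)%:~R) ^+ 2 =
   \sum_k (y k)^+2 + \sum_k ((z k)%:~R ^+2 - 2 * (y k - t) * (z k)%:~R)
   - 2 * t * \sum_k (z k)%:~R.
  rewrite mulr_sumr -!big_split -sumrB /=; apply: eq_bigr => k _; ring.
rewrite -(rmorph_sum (intr : int -> R)) zs /= mulr0 subr0 lerDl.
apply: sumr_ge0 => k _; apply: term_ge0.
have := hp k isT; have := H p k; rewrite /t; move=> h1 h2; apply/andP; split; lra.
Qed.

End Y.
Section X.
Variable R : realType.
Variable g : nat.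

Definition ext (a : 'cV[R]_g) (k : 'I_g.+1) : R :=
  if unlift ord_max k is Some j then a j 0 else - \sum_j a j 0.
Definition iext (c : 'cV[int]_g) (k : 'I_g.+1) : int :=
  if unlift ord_max k is Some j then c j 0 else - \sum_j c j 0.

Lemma sumS (V : nmodType) (F : 'I_g.+1 -> V) :
  \sum_k F k = \sum_j F (lift ord_max j) + F ord_max.
Proof. by rewrite (bigD1_ord ord_max) //= addrC. Qed.

Lemma ext_lift a j : ext a (lift ord_max j) = a j 0.
Proof. by rewrite /ext liftK. Qed.
Lemma ext_max a : ext a ord_max = - \sum_j a j 0.
Proof. by rewrite /ext unlift_none. Qed.
Lemma iext_lift c j : iext c (lift ord_max j) = c j 0.
Proof. by rewrite /iext liftK. Qed.
Lemma iext_max c : iext c ord_max = - \sum_j c j 0.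
Proof. by rewrite /iext unlift_none. Qed.

Lemma sum_ext a : \sum_k ext a k = 0.
Proof.
rewrite sumS ext_max; under eq_bigr do rewrite ext_lift; by rewrite subrr.
Qed.
Lemma sum_iext c : \sum_k iext c k = 0.
Proof.
rewrite sumS iext_max; under eq_bigr do rewrite iext_lift; by rewrite subrr.
Qed.

Lemma iext_col (z : 'I_g.+1 -> int) : \sum_k z k = 0 ->
  forall k, iext (\col_j z (lift ord_max j)) k = z k.
Proof.
rewrite sumS => s0 k.
case: (unliftP ord_max k) => [j ->|->].
  by rewrite iext_lift mxE.
rewrite iext_max; under eq_bigr do rewrite mxE.
by move/eqP: s0; rewrite addrC addr_eq0 => /eqP ->.
Qed.

Lemma ext_sub a c k : ext (a - intvec R c) k = ext a k - (iext c k)%:~R.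
Proof.
case: (unliftP ord_max k) => [j ->|->].
  by rewrite ext_lift ext_lift iext_lift !mxE.
rewrite ext_max ext_max iext_max.
under eq_bigr do rewrite !mxE.
rewrite sumrB intrN (rmorph_sum (intr : int -> R)) /=; ring.
Qed.

Lemma qform_ext x : qform (Qbanana R g) x = \sum_k (ext x k)^+2.
Proof.
rewrite /qform mxE sumS ext_max sqrrN.
under eq_bigr => j _.
  rewrite mxE.
  under eq_bigr => i _ do rewrite !mxE.
  have -> : \sum_i x i 0 * (if i == j then 2 else 1) =
            \sum_i x i 0 + \sum_i (if i == j then x i 0 else 0).
    rewrite -big_split /=; apply: eq_bigr => i _; case: (i == j); ring.
  rewrite sum_if.
  over.
under [X in _ = X + _]eq_bigr do rewrite ext_lift.
rewrite /=.
under eq_bigr do rewrite mulrDl.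
rewrite big_split /= -mulr_sumr addrC; congr (_ + _).
Qed.

Lemma vor_iff a : voronoi (Qbanana R g) a <-> Pn (ext a).
Proof.
have s0 := sum_ext a.
have E : forall c, qform (Qbanana R g) (a - intvec R c) =
   \sum_k (ext a k - (iext c k)%:~R)^+2.
  by move=> c; rewrite qform_ext; apply: eq_bigr => k _; rewrite ext_sub.
split.
  move=> V; split => //; apply/(vorY s0) => z zs.
  have := V (\col_j z (lift ord_max j)).
  rewrite E qform_ext; suff -> : \sum_k (ext a k - (iext (\col_j z (lift ord_max j)) k)%:~R)^+2 = \sum_k (ext a k - (z k)%:~R)^+2 by [].
  by apply: eq_bigr => k _; rewrite iext_col.
move=> [_ H] c; rewrite E qform_ext.
by apply: (proj2 (vorY s0) H); exact: sum_iext.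
Qed.

Definition restr (u : 'I_g.+1 -> R) : 'cV[R]_g := \col_j u (lift ord_max j).

Lemma ext_restr u : \sum_k u k = 0 -> forall k, ext (restr u) k = u k.
Proof.
rewrite sumS => s0 k.
case: (unliftP ord_max k) => [j ->|->].
  by rewrite ext_lift mxE.
rewrite ext_max; under eq_bigr do rewrite mxE.
by move/eqP: s0; rewrite addrC addr_eq0 => /eqP ->.
Qed.

Lemma Pn_ext n (u v : 'I_n -> R) : (forall k, u k = v k) -> Pn u -> Pn v.
Proof.
move=> e [s h]; split.
  by under eq_bigr do rewrite -e.
by move=> i j; rewrite -!e.
Qed.

Lemma vertex_extr a : is_vertex (Qbanana R g) a -> Pn (ext a) /\ extr (ext a).
Proof.
move=> [V ex]; split; first exact/vor_iff.
move=> u v t Pu Pv t01 e.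
have eu := ext_restr (proj1 Pu); have ev := ext_restr (proj1 Pv).
have Vu : voronoi (Qbanana R g) (restr u) by apply/vor_iff; apply: Pn_ext Pu => k; rewrite eu.
have Vv : voronoi (Qbanana R g) (restr v) by apply/vor_iff; apply: Pn_ext Pv => k; rewrite ev.
have := ex _ _ t Vu Vv t01.
have ea : a = t *: restr u + (1 - t) *: restr v.
  apply/matrixP => i j; rewrite (ord1 j) !mxE.
  by rewrite -ext_lift e.
move=> /(_ ea) uv k; by rewrite -eu -ev uv.
Qed.

End X.
Lemma cardP (T : finType) (P : pred T) :
  #|[set x | P x]| = (\sum_x (P x : nat))%N.
Proof.
rewrite -sum1_card big_mkcond /=; apply: eq_bigr => x _; rewrite inE; by case: (P x).
Qed.

Section Z.
Variable R : realType.
Variable g : nat.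
Hypothesis hg : (1 <= g)%N.

Lemma vertex_bracket (a : 'cV[R]_g) : is_vertex (Qbanana R g) a ->
  exists K, (1 <= K <= g)%N /\ bracket K a.
Proof.
move=> /vertex_extr [P E].
have [m [hk [p hp] [q hq]]] := classify (ord0 : 'I_g.+1) (hg : (1 < g.+1)%N) P E.
set S := [set k : 'I_g.+1 | ext a k == m].
set K := #|S|.
have K1 : (1 <= K)%N.
  by apply/card_gt0P; exists p; rewrite inE hp.
have Kg : (K <= g)%N.
  have : (K <= #|[set~ q]|)%N.
    apply: subset_leq_card; apply/subsetP => k; rewrite !inE.
    by apply: contraTneq => ->; rewrite hq; apply/eqP; lra.
  by rewrite cardsC1 card_ord.
have sum0 := proj1 P.
have : \sum_k ext a k = (m - 1) *+ g.+1 + K%:R.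
  rewrite /K cardP natr_sum (_ : (m - 1) *+ g.+1 = \sum_(k < g.+1) (m - 1)); last by rewrite sumr_const card_ord.
  rewrite -big_split /=.
  apply: eq_bigr => k _; case: (hk k) => ->; rewrite ?eqxx /=; first ring.
  have -> : (m - 1 == m) = false by apply/eqP; lra.
  by rewrite addr0.
rewrite sum0 -mulr_natr => hs.
set N : R := (g + 1)%:R.
have N0 : 0 < N by rewrite /N ltr0n addn1.
have hK : K%:R = (1 - m) * N.
  rewrite /N addn1; lra.
have hhi : ((g + 1)%:R - K%:R) / (g + 1)%:R = m.
  rewrite -/N hK; field; rewrite gt_eqF //; have := ler0n R g; lra.
have hlo : - (K%:R / (g + 1)%:R) = m - 1.
  rewrite -/N hK; field; rewrite gt_eqF //; have := ler0n R g; lra.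
exists K; split; first by rewrite K1 Kg.
rewrite /bracket hhi hlo; split.
  by move=> i; rewrite -ext_lift; case: (hk (lift ord_max i)) => ->; [right|left].
have : K = addn #|[set i : 'I_g | a i 0 == m]| (ext a ord_max == m).
  rewrite /K /S !cardP (bigD1_ord ord_max) //= addnC; congr (_ + _)%N.
  by apply: eq_bigr => i _; rewrite ext_lift.
case: (ext a ord_max == m) => /= ->; rewrite ?addn1 ?addn0; by [right|left].
Qed.

End Z.
Lemma int01 (R : realType) (x : R) : x = 0 \/ x = 1 -> exists e : int, x = e%:~R.
Proof. by case=> ->; [exists 0 | exists 1]. Qed.
Unset Implicit Arguments.
Theorem proposition3p2 (R : realType) (g : nat) (hg : (1 <= g)%N)
    (a a' : 'cV[R]_g) :
  is_vertex (Qbanana R g) a -> is_vertex (Qbanana R g) a' ->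
  (vsim (Qbanana R g) a a' <->
   exists k : nat, [/\ (1 <= k <= g)%N, bracket k a & bracket k a']).
Proof.
move=> va va'.
have N0 : (0 : R) < (g + 1)%:R by rewrite ltr0n addn1.
have Nn0 : (g + 1)%:R != 0 :> R by rewrite gt_eqF.
have Nn1 : g%:R + 1 != 0 :> R by rewrite gt_eqF //; have := ler0n R g; lra.
split.
  move=> [c [_ ea]].
  have [K [/andP [K1 Kg] bK]] := vertex_bracket hg va.
  have [K' [/andP [K1' Kg'] bK']] := vertex_bracket hg va'.
  suff eK : K = K'.
    exists K; split; [by rewrite K1 Kg | by [] | by rewrite eK].
  set i0 : 'I_g := Ordinal hg.
  set N : R := (g + 1)%:R.
  have [e he] : exists e : int, (a i0 0) + K%:R / N = e%:~R.
    apply: int01; case: (proj1 bK i0) => ->; [left|right]; rewrite /N; field; try exact: Nn1.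
  have [e' he'] : exists e : int, a' i0 0 + K'%:R / N = e%:~R.
    apply: int01; case: (proj1 bK' i0) => ->; [left|right]; rewrite /N; field; try exact: Nn1.
  move: he'; rewrite ea !mxE => he'.
  set r : int := e - e' - c i0 0.
  have hr : K%:R - K'%:R = N * r%:~R.
    rewrite /r !intrB -he -he'; field; try exact: Nn1.
  have : (1 <= r)%R \/ r = 0 \/ (1 <= - r)%R by lia.
  have k1 : (1 : R) <= K%:R by rewrite ler1n.
  have k2 : (K%:R : R) <= g%:R by rewrite ler_nat.
  have k1' : (1 : R) <= K'%:R by rewrite ler1n.
  have k2' : (K'%:R : R) <= g%:R by rewrite ler_nat.
  have hN : N = g%:R + 1 by rewrite /N natrD.
  case=> [h|[h|h]].
  - have : (1 : R) <= r%:~R by rewrite ler1z.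
    move=> h'; exfalso; nra.
  - move: hr; rewrite h mulr0z mulr0 => /eqP; rewrite subr_eq0 => /eqP; by move=> hh; apply/eqP; rewrite -(eqr_nat R) hh.
  - have : (1 : R) <= (- r)%:~R by rewrite ler1z.
    rewrite intrN => h'; exfalso; nra.
move=> [k [_ [ha hca] [ha' hca']]].
set hi : R := ((g + 1)%:R - k%:R) / (g + 1)%:R.
have hl : hi - (- (k%:R / (g + 1)%:R)) = 1 by rewrite /hi; field; try exact: Nn1.
have i1 : (1 : int)%:~R = 1 :> R by [].
have im1 : (-1 : int)%:~R = -1 :> R by [].
pose c0 : 'cV[int]_g := \col_i (if a i 0 == a' i 0 then 0 else if a i 0 == hi then 1 else -1).
have e1 : a' = a - intvec R c0.
  apply/matrixP => i j; rewrite (ord1 j) !mxE.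
  case: (eqVneq (a i 0) (a' i 0)) => [->|ne]; first by rewrite subr0.
  case: (eqVneq (a i 0) hi) => [eh|nh].
    case: (ha' i) => e'; rewrite e' eh in ne *; last by rewrite eqxx in ne.
    rewrite /= i1; move: hl; rewrite /hi; lra.
  case: (ha i) => e; last by rewrite e eqxx in nh.
  case: (ha' i) => e'; rewrite e e' in ne *; first by rewrite eqxx in ne.
  rewrite /= im1; move: hl; rewrite /hi; lra.
have e2 : a = a' - intvec R (- c0).
  apply/matrixP => i j; rewrite e1 !mxE intrN; ring.
exists c0; split => //.
apply/le_anti/andP; split; first by case: va => V _; apply: V.
rewrite -e1; case: va' => V _; rewrite {1}e2; apply: V.
Qed.
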